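(* Let $G_{\mathrm{AndI}}$ be the $q$-grammar with master variables $\{x,y\}$, rule $x_j\mapsto q^jx_jy_{j+1}$, $y_j\mapsto q^jx_j$, and order AIO, with $q$-derivative $D$, and let $n\ge1$. Every term of $D^n(x_0)$ has the form $w=x_0\prod_{i\in\mathcal{I}}v_i$ (product in increasing order of $i$) for some $\mathcal{I}\subseteq\{1,\dots,n\}$ and $v_i\in\{x_i,y_i\}$. To such a word associate the step sequence $S=(s_1,\dots,s_n)$ with $s_i=U=(1,1)$ if $i\in\mathcal{I}$ and $v_i=x_i$, $s_i=L=(1,0)$ if $i\in\mathcal{I}$ and $v_i=y_i$, and $s_i=D^*=(1,-1)$ if $i\notin\mathcal{I}$. Then a word $w$ of this form is a term of $D^n(x_0)$ if and only if $S$ is a Motzkin path of length $n$ (a lattice path starting at height $0$ that never goes below height $0$ and ends at height $0$). Consequently the number of terms of $D^n(x_0)$ equals the $n$-th Motzkin number $M_n$.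
   Context: $\mathbb{K}$ is a commutative ring with unity and characteristic zero, $q$ an indeterminate. For a set $S$ of master variables, $\mathbb{S}=\{s_i:s\in S,\ i\ge0\}$ is a set of non-commuting variables, $F(\mathbb{S})$ the free group on $\mathbb{S}$, $\mathbb{E}=\mathbb{K}[q][F(\mathbb{S})]$ its group algebra. A rule $R$ assigns to each $s_i$ an element of $\mathbb{E}$, extended by $R(s_i^{-1})=-s_i^{-1}R(s_i)s_{i+1}^{-1}$. The up-arrow $\uparrow$ is the linear map replacing each letter $s_i^{\pm1}$ by $s_{i+1}^{\pm1}$. AIO stably reorders the letters of a word according to the position of their underlying variable in $x_0,y_0,x_1,y_1,\dots$. The $q$-derivative of a $q$-grammar $(S,R,\rho)$ is the $\mathbb{K}[q]$-linear map with $D(w_1\cdots w_n)=\sum_{j=1}^n\rho\big(w_1\cdots w_{j-1}R(w_j)\uparrow(w_{j+1}\cdots w_n)\big)$, $D^0=\mathrm{id}$, $D^k=D\circ D^{k-1}$. Writing an element of $\mathbb{E}$ as $\sum_{w\in F(\mathbb{S})}a_ww$, its terms are the words $w$ with $a_w\ne0$. *)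

(* Defs.v *)
From HB Require Import structures.
From mathcomp Require Import all_boot all_order all_algebra.
Set Implicit Arguments. Unset Strict Implicit. Unset Printing Implicit Defensive.
Import Order.TTheory GRing.Theory Num.Theory.
Local Open Scope ring_scope.

(* Master variables {x, y} encoded by bool: false = x, true = y.             *)
(* A variable s_i of S is a pair (s, i).                                     *)
Definition letter := (bool * nat)%type.
(* A signed letter (s_i, e): e = false means s_i, e = true means s_i^{-1}.  *)
Definition sletter := (letter * bool)%type.
(* Words over signed letters; elements of F(S) are the reduced words.       *)
Definition word := seq sletter.

Definition sinv (a : sletter) : sletter := (a.1, ~~ a.2).

Fixpoint reduce (w : word) : word :=
  match w with
  | [::] => [::]
  | a :: s =>
      let t := reduce s in
      match t with
      | b :: t' => if b == sinv a then t' else a :: t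
      | [::] => [:: a]
      end
  end.

(* An element is represented by a finite formal sum  sum_k c_k w_k,         *)
(* given as a list of (coefficient, word) pairs; q is the variable 'X.      *)
Definition elt (K : comNzRingType) := seq ({poly K} * word)%type.

Section GroupAlgebra.
Variable K : comNzRingType.

Definition coeffE (A : elt K) (w : word) : {poly K} :=
  \sum_(p <- A | reduce p.2 == w) p.1.

Definition is_term (A : elt K) (w : word) : Prop := coeffE A w != 0.

Definition terms (A : elt K) : seq word :=
  [seq w <- undup [seq reduce p.2 | p <- A] | coeffE A w != 0].
Definition num_terms (A : elt K) : nat := size (terms A).

Definition monoE (w : word) : elt K := [:: (1, w)].
Definition mulE (A B : elt K) : elt K :=
  [seq (p.1 * r.1, reduce (p.2 ++ r.2)) | p <- A, r <- B].
Definition scaleE (c : {poly K}) (A : elt K) : elt K :=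
  [seq (c * p.1, p.2) | p <- A].

Definition shiftl (s : letter) : letter := (s.1, s.2.+1).
Definition up (w : word) : word := [seq (shiftl a.1, a.2) | a <- w].

Definition rhoE (rho : word -> word) (A : elt K) : elt K :=
  [seq (p.1, reduce (rho (reduce p.2))) | p <- A].

Definition ruleext (R : letter -> elt K) (a : sletter) : elt K :=
  if a.2 then
    scaleE (-1) (mulE (mulE (monoE [:: (a.1, true)]) (R a.1))
                      (monoE [:: (shiftl a.1, true)]))
  else R a.1.

Definition dflt_sletter : sletter := ((false, 0%N), false).

(* D(w_1 ... w_n) = sum_j rho(w_1...w_{j-1} R(w_j) up(w_{j+1}...w_n)) *)
Definition Dword (R : letter -> elt K) (rho : word -> word) (w : word) : elt K :=
  flatten [seq rhoE rho (mulE (mulE (monoE (take j w))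
                                     (ruleext R (nth dflt_sletter w j)))
                               (monoE (up (drop j.+1 w)))) | j <- iota 0 (size w)].

Definition qderiv (R : letter -> elt K) (rho : word -> word) (A : elt K) : elt K :=
  flatten [seq scaleE p.1 (Dword R rho (reduce p.2)) | p <- A].

Definition rule_AndI (s : letter) : elt K :=
  if s.1 then [:: ('X^(s.2), [:: ((false, s.2), false)])]
  else [:: ('X^(s.2), [:: ((false, s.2), false); ((true, s.2.+1), false)])].

(* AIO: stable sort by position of the underlying variable in
   x_0, y_0, x_1, y_1, ...  (x_i at 2i, y_i at 2i+1) *)
Definition aio_key (a : sletter) : nat := ((a.1.2).*2 + a.1.1)%N.
Definition aio (w : word) : word := sort (fun a b => aio_key a <= aio_key b)%N w.

Definition x0 : word := [:: ((false, 0%N), false)].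

Definition DnAndI (n : nat) : elt K := iter n (qderiv rule_AndI aio) (monoE x0).

End GroupAlgebra.

(* f i (for i : 'I_n, standing for index i+1 in {1..n}):
   None       <-> i+1 not in I,
   Some false <-> i+1 in I and v_{i+1} = x_{i+1},
   Some true  <-> i+1 in I and v_{i+1} = y_{i+1}.                          *)
Definition word_of (n : nat) (f : {ffun 'I_n -> option bool}) : word :=
  ((false, 0%N), false) ::
  flatten [seq (if f i is Some b then [:: ((b, (val i).+1), false)] else [::])
          | i <- enum 'I_n].

Definition step (o : option bool) : int :=
  match o with Some false => 1 | Some true => 0 | None => -1 end.

Definition steps (n : nat) (f : {ffun 'I_n -> option bool}) : seq int :=
  [seq step (f i) | i <- enum 'I_n].

Definition is_motzkin (s : seq int) : bool :=
  all (fun k => 0 <= \sum_(e <- take k s) e) (iota 0 (size s).+1)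
  && (\sum_(e <- s) e == 0).

Definition motzkin_number (n : nat) : nat :=
  #|[set f : {ffun 'I_n -> option bool} | is_motzkin (steps f)]|.

(* Main.v *)
Require Import Defs.
From HB Require Import structures.
From mathcomp Require Import all_boot all_order all_algebra.
From mathcomp Require Import zify.
Import Order.TTheory GRing.Theory Num.Theory.
Set Implicit Arguments. Unset Strict Implicit.
Local Open Scope ring_scope.

Definition x0L : sletter := ((false, 0%N), false).

Fixpoint enc (k : nat) (g : seq (option bool)) : word :=
  match g with
  | [::] => [::]
  | Some b :: g' => ((b, k), false) :: enc k.+1 g'
  | None :: g' => enc k.+1 g'
  end.

Definition W g := x0L :: enc 1 g.

Fixpoint Sg (g : seq (option bool)) : seq (seq (option bool)) :=
  match g with
  | [::] => [::]
  | None :: g' => [seq None :: h | h <- Sg g']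
  | Some false :: g' => (Some false :: Some true :: g') :: [seq Some false :: h | h <- Sg g']
  | Some true :: g' => (Some false :: None :: g') :: [seq Some true :: h | h <- Sg g']
  end.

Definition Dg g := (Some true :: g) :: Sg g.

Definition rw (a : sletter) : word :=
  if a.1.1 then [:: ((false, a.1.2), false)]
  else [:: ((false, a.1.2), false); ((true, a.1.2.+1), false)].

Fixpoint Tw (w : word) : seq word :=
  match w with
  | [::] => [::]
  | a :: w' => (rw a ++ up w') :: [seq a :: u | u <- Tw w']
  end.

Lemma up_enc k g : up (enc k g) = enc k.+1 g.
Proof. by elim: g k => [|[[]|] g IH] k //=; rewrite IH. Qed.

Lemma Tw_enc k g : Tw (enc k g) = map (enc k) (Sg g).
Proof.
elim: g k => [|[[]|] g IH] k //=; rewrite ?up_enc IH -map_comp; try reflexivity; by rewrite -map_comp.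
Qed.

Lemma Tw_W g : Tw (W g) = map W (Dg g).
Proof. by rewrite /W /= up_enc Tw_enc -map_comp. Qed.

Lemma Tw_eq w :
  [seq take j w ++ rw (nth dflt_sletter w j) ++ up (drop j.+1 w) | j <- iota 0 (size w)]
  = Tw w.
Proof.
elim: w => [|a w IH] //=.
rewrite drop0 -IH; congr (_ :: _).
have E : iota 1 (size w) = [seq (1+i)%N | i <- iota 0 (size w)] := iotaDl 1 0 _. rewrite E -!map_comp; apply: eq_map => j /=.
by rewrite add1n.
Qed.

Definition posw (w : word) := all (fun a : sletter => ~~ a.2) w.

Lemma reduce_pos w : posw w -> reduce w = w.
Proof.
elim: w => [|a w IH] //= /andP [Ha Hw].
rewrite IH //.
case: w Hw {IH} => [|b t] //= /andP [Hb _].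
case: eqP => // E.
have := congr1 snd E. rewrite /sinv /=. move: Ha Hb; case: (a.2); case: (b.2) => //.
Qed.

Lemma posw_cat u v : posw (u ++ v) = posw u && posw v.
Proof. by rewrite /posw all_cat. Qed.

Lemma posw_take j w : posw w -> posw (take j w).
Proof. by rewrite -{1}(cat_take_drop j w) posw_cat => /andP []. Qed.
Lemma posw_drop j w : posw w -> posw (drop j w).
Proof. by rewrite -{1}(cat_take_drop j w) posw_cat => /andP []. Qed.
Lemma posw_up w : posw w -> posw (up w).
Proof. by rewrite /posw /up all_map. Qed.
Lemma posw_rw a : posw (rw a).
Proof. by rewrite /rw; case: ifP. Qed.
Lemma posw_aio w : posw w -> posw (aio w).
Proof. by rewrite /posw /aio all_sort. Qed.

Lemma posw_enc k g : posw (enc k g).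
Proof. by elim: g k => [|[[]|] g IH] k //=. Qed.
Lemma posw_W g : posw (W g).
Proof. exact: posw_enc. Qed.

Definition leK (a b : sletter) := (aio_key a <= aio_key b)%N.

Lemma path_enc k a g : (aio_key a <= k.*2)%N -> path leK a (enc k g).
Proof.
elim: g k a => [|[b|] g IH] k a //= H.
  apply/andP; split; first by move: H; rewrite /leK /aio_key /=; case: b; lia.
  by apply: IH; rewrite /aio_key /=; case: b; lia.
apply: IH; lia.
Qed.

Lemma aio_W g : aio (W g) = W g.
Proof.
apply: sorted_sort; first by move=> a b c; apply: leq_trans.
exact: (@path_enc 1 x0L g).
Qed.

Lemma enc_ge k g : all (fun a : sletter => (k <= a.1.2)%N) (enc k g).
Proof.
elim: g k => [|[b|] g IH] k //=.
  rewrite leqnn /=; apply: sub_all (IH k.+1) => a /=; lia.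
apply: sub_all (IH k.+1) => a /=; lia.
Qed.

Lemma enc_inj k g g' : size g = size g' -> enc k g = enc k g' -> g = g'.
Proof.
elim: g k g' => [|o g IH] k [|o' g'] //= [Hs].
case: o => [b|]; case: o' => [b'|] //=.
- by case=> -> /IH ->.
- move=> E; have := enc_ge k.+1 g'; rewrite -E /=; lia.
- move=> E; have := enc_ge k.+1 g; rewrite E /=; lia.
- by move/IH ->.
Qed.

Lemma W_inj g g' : size g = size g' -> W g = W g' -> g = g'.
Proof. by move=> Hs [] /enc_inj; apply. Qed.

Fixpoint ok (h : int) (s : seq int) : bool :=
  match s with
  | [::] => h == 0
  | e :: s' => (0 <= h + e) && ok (h + e) s'
  end.

Definition okm g := ok 0 (map step g).

Definition okS (h : int) (s : seq int) :=
  all (fun k => 0 <= h + \sum_(e <- take k s) e) (iota 0 (size s).+1)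
  && (h + \sum_(e <- s) e == 0).

Lemma all_iota0S (P : pred nat) n :
  all P (iota 0 n.+1) = P 0%N && all (fun k => P k.+1) (iota 0 n).
Proof.
rewrite [iota 0 n.+1]/=; have := iotaDl 1 0 n; rewrite addn0 => ->.
by rewrite /= all_map.
Qed.

Lemma okS_ok h s : okS h s = (0 <= h) && ok h s.
Proof.
elim: s h => [|e s IH] h.
  by rewrite /okS /= !big_nil addr0 andbT; case: (h =P 0) => [->|]; rewrite ?andbF.
rewrite /okS [size _]/= all_iota0S take0 big_nil addr0.
have -> : all (fun k => 0 <= h + \sum_(e0 <- take k.+1 (e :: s)) e0) (iota 0 (size s).+1)
   = all (fun k => 0 <= (h + e) + \sum_(e0 <- take k s) e0) (iota 0 (size s).+1).
  by apply: eq_all => k /=; rewrite big_cons addrA.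
rewrite big_cons addrA.
rewrite -andbA; have := IH (h + e); rewrite /okS => ->.
by [].
Qed.

Lemma is_motzkin_ok s : is_motzkin s = ok 0 s.
Proof.
have := okS_ok 0 s; rewrite lexx /= => <-.
rewrite /okS /is_motzkin add0r; congr (_ && _).
by apply: eq_all => k; rewrite add0r.
Qed.

Lemma size_Sg g g' : g' \in Sg g -> size g' = (size g).+1.
Proof.
elim: g g' => [|[[]|] g IH] g' //=.
- rewrite inE => /orP [/eqP -> //| /mapP [h Hh ->]] /=; by rewrite (IH _ Hh).
- rewrite inE => /orP [/eqP -> //| /mapP [h Hh ->]] /=; by rewrite (IH _ Hh).
- move=> /mapP [h Hh ->] /=; by rewrite (IH _ Hh).
Qed.

Lemma size_Dg g g' : g' \in Dg g -> size g' = (size g).+1.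
Proof. by rewrite inE => /orP [/eqP -> //|/size_Sg]. Qed.

Lemma ok_Sg h g g' : ok h (map step g) -> g' \in Sg g -> ok h (map step g').
Proof.
elim: g h g' => [|[[]|] g IH] h g' //=.
- move=> /andP [H1 H2]; rewrite inE => /orP [/eqP -> | /mapP [u Hu ->]] /=.
    rewrite addr0 in H1 H2; rewrite addrK H1 H2 andbT; lia.
  by rewrite H1 (IH _ _ H2 Hu).
- move=> /andP [H1 H2]; rewrite inE => /orP [/eqP -> | /mapP [u Hu ->]] /=.
    by rewrite addr0 H1 H2.
  by rewrite H1 (IH _ _ H2 Hu).
- move=> /andP [H1 H2] /mapP [u Hu ->] /=.
  by rewrite H1 (IH _ _ H2 Hu).
Qed.

Lemma okm_Dg g g' : okm g -> g' \in Dg g -> okm g'.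
Proof.
rewrite /okm inE => H /orP [/eqP -> | Hs] /=; last exact: ok_Sg H Hs.
by rewrite addr0 H.
Qed.

Lemma Sg_surj h r : 0 <= h -> ok h (map step (Some false :: r)) ->
  exists g, [/\ ok h (map step g), size g = size r & Some false :: r \in Sg g].
Proof.
elim: r h => [|[[]|] r IH] h Hh /=.
- move=> /andP [_ /eqP]; lia.
- move=> /andP [H1 /andP [H2 H3]].
  exists (Some false :: r); split => //=.
    by rewrite H1; rewrite addr0 in H3.
  by rewrite inE eqxx.
- move=> /andP [H1 /andP [H2 H3]].
  have [g [G1 G2 G3]] := IH (h + 1) H1 (introT andP (conj H2 H3)).
  exists (Some false :: g); split => /=.
  + by rewrite H1.
  + by rewrite G2.
  + by rewrite inE; apply/orP; right; apply: map_f.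
- move=> /andP [H1 /andP [H2 H3]].
  exists (Some true :: r); split => //=.
    rewrite addrK in H3. by rewrite addr0 Hh H3.
  by rewrite inE eqxx.
Qed.

Lemma Dg_surj g' : okm g' -> (0 < size g')%N ->
  exists g, [/\ okm g, (size g).+1 = size g' & g' \in Dg g].
Proof.
case: g' => [|[[]|] r] // H _.
- exists r; split => //; last by rewrite inE eqxx.
- have [g [G1 G2 G3]] := @Sg_surj 0 r (lexx 0) H.
  exists g; split => //=. all: try by rewrite G2. all: by rewrite inE G3 orbT.
Qed.

Definition posp (K : comNzRingType) (c : {poly K}) :=
  exists2 s : seq nat, s != [::] & c = \sum_(k <- s) 'X^k.

Arguments posp {K}.
Lemma posp_mulX (K : comNzRingType) (c : {poly K}) i :
  posp c -> posp (c * (1 * 'X^i * 1)).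
Proof.
case=> s Hs ->; exists [seq (k + i)%N | k <- s]; first by case: s Hs.
by rewrite mul1r mulr1 big_map mulr_suml; apply: eq_bigr => k _; rewrite exprD.
Qed.

Lemma coef_sumX (K : comNzRingType) (s : seq nat) x :
  (\sum_(k <- s) ('X^k : {poly K}))`_x = (count (pred1 x) s)%:R.
Proof.
elim: s => [|a s IH]; first by rewrite big_nil coef0.
by rewrite big_cons coefD IH coefXn /= natrD eq_sym.
Qed.

Lemma posp_neq0 (K : comNzRingType)
  (charK0 : forall m : nat, (m%:R : K) = 0 -> m = 0%N) (c : {poly K}) :
  posp c -> c != 0.
Proof.
case=> [[|a s]] // _ ->; apply/eqP => E.
have := coef_sumX K (a :: s) a; rewrite E coef0 => /esym /charK0.
by rewrite /= eqxx.
Qed.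

Lemma posp_coeff (K : comNzRingType) (A : elt K) w :
  (forall p, p \in A -> posp p.1) -> has (fun p => reduce p.2 == w) A ->
  posp (coeffE A w).
Proof.
rewrite /coeffE; elim: A => [|a A IH] //= HA.
rewrite big_cons.
have HA' : forall p, p \in A -> posp p.1 by move=> p Hp; apply: HA; rewrite inE Hp orbT.
have Ha : posp a.1 by apply: HA; rewrite inE eqxx.
case: ifP => Hw /=.
  move=> _; case: Ha => s Hs ->.
  case Hh: (has (fun p => reduce p.2 == w) A).
    case: (IH HA' Hh) => t _ ->.
    by exists (s ++ t); [by case: s Hs | rewrite big_cat].
  by rewrite big_hasC ?Hh // addr0; exists s.
exact: IH.
Qed.

Lemma coeff0 (K : comNzRingType) (A : elt K) w :
  ~~ has (fun p => reduce p.2 == w) A -> coeffE A w = 0.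
Proof. exact: big_hasC. Qed.

Lemma flatten_single (U : Type) (F : nat -> seq U) (G : nat -> U) s :
  (forall j, j \in s -> F j = [:: G j]) -> flatten (map F s) = map G s.
Proof.
elim: s => [|a s IH] //= H.
rewrite H ?inE ?eqxx // IH // => j Hj; apply: H; by rewrite inE Hj orbT.
Qed.

Lemma Dword_eq (K : comNzRingType) w : posw w ->
  Dword (rule_AndI K) aio w =
  [seq (1 * 'X^((nth dflt_sletter w j).1.2) * 1,
        aio (take j w ++ rw (nth dflt_sletter w j) ++ up (drop j.+1 w)))
  | j <- iota 0 (size w)].
Proof.
move=> Hw; rewrite /Dword; apply: flatten_single => j; rewrite mem_iota => /andP [_ Hj].
have Ha : ~~ (nth dflt_sletter w j).2 by apply: (allP Hw); apply: mem_nth.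
have Hr := posw_rw (nth dflt_sletter w j).
have Ht := @posw_take j w Hw.
have Hd := @posw_up _ (@posw_drop j.+1 w Hw).
rewrite /ruleext (negbTE Ha) /rule_AndI.
move: Hr; rewrite /rw.
case: ifP => _ Hr; rewrite /mulE /monoE /rhoE /=;
 rewrite !reduce_pos ?posw_aio ?posw_cat ?Ht ?Hr ?Hd ?reduce_pos ?posw_cat ?Ht ?Hr ?Hd //;
 by rewrite -catA.
Qed.

Lemma Dword_W (K : comNzRingType) g d :
  d \in Dword (rule_AndI K) aio (W g) ->
  (exists i, d.1 = 1 * 'X^i * 1) /\ exists2 g', g' \in Dg g & d.2 = W g'.
Proof.
rewrite Dword_eq ?posw_W // => /mapP [j Hj ->]; split; first by eexists.
have : take j (W g) ++ rw (nth dflt_sletter (W g) j) ++ up (drop j.+1 (W g))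
   \in Tw (W g) by rewrite -Tw_eq; apply/mapP; exists j.
rewrite Tw_W => /mapP [g' Hg' E]; exists g' => //=.
by rewrite E aio_W.
Qed.

Lemma W_Dword (K : comNzRingType) g g' : g' \in Dg g ->
  exists2 d, d \in Dword (rule_AndI K) aio (W g) & d.2 = W g'.
Proof.
move=> Hg; have : W g' \in Tw (W g) by rewrite Tw_W map_f.
rewrite -Tw_eq => /mapP [j Hj E].
eexists; first by rewrite Dword_eq ?posw_W //; apply: (map_f _ Hj).
by rewrite /= -E aio_W.
Qed.

Lemma mem_qderiv (K : comNzRingType) R rho (A : elt K) r :
  r \in qderiv R rho A ->
  exists2 p, p \in A & exists2 d, d \in Dword R rho (reduce p.2) & r = (p.1 * d.1, d.2).
Proof.
rewrite /qderiv => /flattenP [s /mapP [p Hp ->] /mapP [d Hd ->]].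
by exists p => //; exists d.
Qed.

Lemma qderiv_mem (K : comNzRingType) R rho (A : elt K) p d :
  p \in A -> d \in Dword R rho (reduce p.2) -> (p.1 * d.1, d.2) \in qderiv R rho A.
Proof.
move=> Hp Hd; rewrite /qderiv; apply/flattenP.
exists (scaleE p.1 (Dword R rho (reduce p.2))); first exact: map_f.
by apply/mapP; exists d.
Qed.

Definition Inv (K : comNzRingType) m (A : elt K) :=
  forall p, p \in A -> posp p.1 /\ exists g, [/\ size g = m, okm g & p.2 = W g].
Arguments Inv {K}.
Definition Reach (K : comNzRingType) m (A : elt K) :=
  forall g, size g = m -> okm g -> exists2 p, p \in A & p.2 = W g.
Arguments Reach {K}.

Lemma step_ok (K : comNzRingType) m (A : elt K) :
  Inv m A -> Reach m A ->
  Inv m.+1 (qderiv (rule_AndI K) aio A) /\ Reach m.+1 (qderiv (rule_AndI K) aio A).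
Proof.
move=> HI HR; split.
  move=> r /mem_qderiv [p Hp [d Hd ->]].
  have [Pp [g [G1 G2 G3]]] := HI p Hp.
  move: Hd; rewrite G3 reduce_pos ?posw_W // => /Dword_W [[i ->] [g' Hg' E]].
  split; first exact: posp_mulX.
  exists g'; split => //.
  - by rewrite (@size_Dg g g' Hg') G1.
  - exact: (@okm_Dg g g' G2 Hg').
move=> g' Hs Hok.
have Hs0 : (0 < size g')%N by rewrite Hs.
have [g [G1 G2 G3]] := Dg_surj Hok Hs0.
have Hsg : size g = m by apply: succn_inj; rewrite G2 Hs.
have [p Hp Ep] := HR g Hsg G1.
have [d Hd Ed] := W_Dword K G3.
exists (p.1 * d.1, d.2) => //.
by apply: qderiv_mem => //; rewrite Ep reduce_pos ?posw_W.
Qed.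

Lemma DnAndI_ok (K : comNzRingType) m : Inv m (DnAndI K m) /\ Reach m (DnAndI K m).
Proof.
elim: m => [|m [IH1 IH2]].
  split.
    move=> p; rewrite /DnAndI /= inE => /eqP -> /=; split.
      by exists [:: 0%N] => //; rewrite big_seq1 expr0.
    by exists [::].
  move=> [|//] _ _; exists (1, x0); by rewrite ?inE.
rewrite /DnAndI iterS; exact: step_ok.
Qed.

Definition gf n (f : {ffun 'I_n -> option bool}) := [seq f i | i <- enum 'I_n].

Lemma size_gf n (f : {ffun 'I_n -> option bool}) : size (gf f) = n.
Proof. by rewrite size_map size_enum_ord. Qed.

Definition encF (o : nat * option bool) : word :=
  if o.2 is Some b then [:: ((b, o.1), false)] else [::].

Lemma enc_zip k g : enc k g = flatten [seq encF o | o <- zip (iota k (size g)) g].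
Proof. by elim: g k => [|[b|] g IH] k //=; rewrite IH. Qed.

Lemma zip_map2 (T U V : Type) (F : T -> U) (G : T -> V) s :
  zip (map F s) (map G s) = map (fun x => (F x, G x)) s.
Proof. by elim: s => //= a s ->. Qed.

Lemma word_of_W n (f : {ffun 'I_n -> option bool}) : word_of f = W (gf f).
Proof.
rewrite /word_of /W enc_zip size_gf; congr (_ :: _).
have -> : iota 1 n = [seq (val i).+1 | i <- enum 'I_n].
  by rewrite (map_comp succn val) val_enum_ord -(iotaDl 1 0 n).
rewrite zip_map2 -map_comp; congr flatten; apply: eq_map => i /=.
Qed.

Lemma steps_gf n (f : {ffun 'I_n -> option bool}) : steps f = map step (gf f).
Proof. by rewrite /steps /gf -map_comp. Qed.

Lemma gf_surj n g : size g = n -> exists f : {ffun 'I_n -> option bool}, gf f = g.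
Proof.
move=> Hs; exists [ffun i : 'I_n => nth None g i].
rewrite /gf (eq_map (g := nth None g \o val)); last by move=> i; rewrite ffunE.
by rewrite map_comp val_enum_ord -Hs; exact: (mkseq_nth None g).
Qed.

Lemma gf_inj n : injective (@gf n).
Proof.
move=> f1 f2 E; apply/ffunP => i.
have H : nth None (gf f1) i = nth None (gf f2) i by rewrite E.
move: H; rewrite /gf !(nth_map i) -?enumT; try by rewrite size_enum_ord.
by rewrite nth_ord_enum.
Qed.

Lemma word_of_inj n : injective (@word_of n).
Proof.
move=> f1 f2; rewrite !word_of_W => /W_inj E; apply: gf_inj; apply: E.
by rewrite !size_gf.
Qed.

Unset Implicit Arguments.
Theorem proposition6p9 (K : comNzRingType)
  (charK0 : forall m : nat, (m%:R : K) = 0 -> m = 0%N)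
  (n : nat) (hn : (1 <= n)%N) :
  (forall w : word, is_term (DnAndI K n) w ->
     exists f : {ffun 'I_n -> option bool}, w = word_of f)
  /\ (forall f : {ffun 'I_n -> option bool},
        is_term (DnAndI K n) (word_of f) <-> is_motzkin (steps f))
  /\ num_terms (DnAndI K n) = motzkin_number n.
Proof.
have [HI HR] := DnAndI_ok K n.
set A := DnAndI K n in HI HR *.
have Tiff : forall w : word, is_term A w <-> exists f : {ffun 'I_n -> option bool}, w = word_of f /\ okm (gf f).
  move=> w; split.
    rewrite /is_term => Hc.
    have Hh : has (fun p => reduce p.2 == w) A.
      by apply/negPn; apply: contra Hc => /coeff0 ->.
    case/hasP: Hh => p Hp /eqP Ew.
    have [_ [g [G1 G2 G3]]] := HI p Hp.
    have [f Hf] := gf_surj G1.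
    exists f; rewrite word_of_W Hf -Ew G3 reduce_pos ?posw_W //.
  case=> f [-> Hok].
  have [p Hp Ep] := HR (gf f) (size_gf f) Hok.
  apply: (posp_neq0 charK0); apply: posp_coeff.
    by move=> q Hq; case: (HI q Hq).
  by apply/hasP; exists p => //; rewrite Ep reduce_pos ?posw_W // word_of_W.
have Tf : forall f : {ffun 'I_n -> option bool}, is_term A (word_of f) <-> okm (gf f).
  move=> f; split.
    by case/Tiff => f' [/word_of_inj ->].
  by move=> H; apply/Tiff; exists f.
split; first by move=> w /Tiff [f [-> _]]; exists f.
split.
  by move=> f; rewrite Tf /okm steps_gf is_motzkin_ok.
rewrite /num_terms /motzkin_number cardE.
rewrite -(size_map (@word_of n)).
apply: perm_size; apply: uniq_perm.
- by rewrite filter_uniq // undup_uniq.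
- rewrite map_inj_uniq ?enum_uniq //; exact: word_of_inj.
move=> w; rewrite /terms mem_filter mem_undup.
apply/idP/idP.
  move=> /andP [Hc _]; have : is_term A w by [].
  case/Tiff => f [-> Hok]; apply: map_f.
  by rewrite mem_enum inE steps_gf is_motzkin_ok.
case/mapP => f; rewrite mem_enum inE steps_gf is_motzkin_ok => Hm ->.
have Ht : is_term A (word_of f) by apply/Tf.
rewrite Ht /=.
apply/mapP.
move: Ht; rewrite /is_term => Hc.
have : has (fun p => reduce p.2 == word_of f) A.
  by apply/negPn; apply: contra Hc => /coeff0 ->.
by case/hasP => p Hp /eqP <-; exists p.
Qed.
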